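(* Let $p\in[1,\infty)$. If $\lim_{|x|\to\infty}\int_{-\infty}^{\infty}G(x,t)\,dt=0$, then $$\lim_{N\to\infty}\ \sup_{\|f\|_p\le1}\int_{|x|\ge N}|(Gf)(x)|^p\,dx=0,$$ the supremum being over $f\in L_p(\mathbb R)$ with $\|f\|_p\le 1$.
   Context: Let $q:\mathbb R\to\mathbb R$ be measurable with $q\in L_1^{\mathrm{loc}}(\mathbb R)$ and $q(x)\ge1$ a.e. A principal fundamental system of solutions (PFSS) of $z''=q(x)z$ is a pair $u,v$ of solutions ($C^1$, derivative locally absolutely continuous, equation a.e.) such that for all $x$: $u>0$, $v>0$, $u'<0$, $v'>0$, $v'u-u'v=1$, $u(x)=v(x)\int_x^\infty v(t)^{-2}dt$, and $u,u'\to0$ as $x\to\infty$, $v,v'\to0$ as $x\to-\infty$, $v,v'\to\infty$ as $x\to\infty$, $u,|u'|\to\infty$ as $x\to-\infty$. Fix a PFSS $\{u,v\}$. The Green function is $G(x,t)=u(x)v(t)$ for $x\ge t$ and $G(x,t)=u(t)v(x)$ for $x\le t$, and $(Gf)(x)=\int_{-\infty}^\infty G(x,t)f(t)\,dt$. *)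

(* Defs.v *)
From HB Require Import structures.
From mathcomp Require Import all_boot all_order all_algebra.
From mathcomp Require Import all_classical all_reals all_analysis.
Set Implicit Arguments. Unset Strict Implicit. Unset Printing Implicit Defensive.
Import Order.TTheory GRing.Theory Num.Theory.
Import numFieldNormedType.Exports.
Local Open Scope classical_set_scope.
Local Open Scope ring_scope.

Definition abs_cont_on (R : realType) (a b : R) (f : R -> R) : Prop :=
  forall eps : R, 0 < eps -> exists2 delta : R, 0 < delta &
    forall (n : nat) (l r : nat -> R),
      (forall i, (i < n)%N -> a <= l i /\ l i <= r i /\ r i <= b) ->
      (forall i j, (i < n)%N -> (j < n)%N -> i <> j -> r i <= l j \/ r j <= l i) ->
      \sum_(i < n) (r i - l i) < delta ->
      \sum_(i < n) `|f (r i) - f (l i)| < eps.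

Definition loc_abs_cont (R : realType) (f : R -> R) : Prop :=
  forall a b : R, a <= b -> abs_cont_on a b f.

Definition admissible_q (R : realType) (q : R -> R) : Prop :=
  measurable_fun [set: R] q /\
  (forall a b : R, (@lebesgue_measure R).-integrable `[a, b] (EFin \o q)) /\
  {ae @lebesgue_measure R, forall x, 1 <= q x}.

Definition is_solution (R : realType) (q z z' : R -> R) : Prop :=
  (forall x : R, is_derive x (1 : R) z (z' x)) /\
  continuous z' /\
  loc_abs_cont z' /\
  {ae @lebesgue_measure R, forall x : R, is_derive x (1:R) z' (q x * z x)}.

Definition PFSS (R : realType) (q u u' v v' : R -> R) : Prop :=
  is_solution q u u' /\ is_solution q v v' /\
  (forall x, 0 < u x) /\ (forall x, 0 < v x) /\
  (forall x, u' x < 0) /\ (forall x, 0 < v' x) /\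
  (forall x, v' x * u x - u' x * v x = 1) /\
  (forall x, ((u x)%:E = (v x)%:E *
       \int[@lebesgue_measure R]_(t in `[x, +oo[) ((v t) ^-2)%:E)%E) /\
  u x @[x --> +oo] --> 0 /\ u' x @[x --> +oo] --> 0 /\
  v x @[x --> -oo] --> 0 /\ v' x @[x --> -oo] --> 0 /\
  v x @[x --> +oo] --> +oo /\ v' x @[x --> +oo] --> +oo /\
  u x @[x --> -oo] --> +oo /\ `|u' x| @[x --> -oo] --> +oo.

Definition green (R : realType) (u v : R -> R) (x t : R) : R :=
  if t <= x then u x * v t else u t * v x.

Definition green_op (R : realType) (u v f : R -> R) (x : R) : \bar R :=
  (\int[@lebesgue_measure R]_t (green u v x t * f t)%:E)%E.

(* Main.v *)
Require Import Defs.
From HB Require Import structures.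
From mathcomp Require Import all_boot all_order all_algebra.
From mathcomp Require Import all_classical all_reals all_analysis.
From mathcomp Require Import measurable_realfun.
Import Order.TTheory GRing.Theory Num.Theory.
Import numFieldNormedType.Exports.
Local Open Scope classical_set_scope.
Local Open Scope ring_scope.

Lemma green_sym (R : realType) (u v : R -> R) x t :
  green u v x t = green u v t x.
Proof.
rewrite /green; have [tx|xt] := leP t x.
  have [xt'|//] := leP x t.
  by have -> : x = t by apply/le_anti; rewrite xt' tx.
by rewrite (ltW xt).
Qed.

Lemma deriv_cont (R : realType) (f f' : R -> R) :
  (forall x, is_derive x (1:R) f (f' x)) -> continuous f.
Proof.
move=> df x; apply: differentiable_continuous.
by apply/derivable1_diffP; exact: ex_derive.
Qed.

Lemma deriv_ndecr (R : realType) (f f' : R -> R) :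
  (forall x, is_derive x (1:R) f (f' x)) -> (forall x, 0 <= f' x) ->
  {homo f : x y / x <= y}.
Proof.
move=> df f0 x y xy.
have dz z : derivable f z 1 := @ex_derive _ _ _ _ _ _ _ (df z).
apply: (@ger0_derive1_ndecr _ f x y) => //.
- by move=> z _; rewrite derive1E (@derive_val _ _ _ _ _ _ _ (df z)).
- by apply: derivable_within_continuous => z _; exact: dz.
Qed.

Lemma deriv_nincr (R : realType) (f f' : R -> R) :
  (forall x, is_derive x (1:R) f (f' x)) -> (forall x, f' x <= 0) ->
  {homo f : x y /~ x <= y}.
Proof.
move=> df f0 x y xy.
have dz z : derivable f z 1 := @ex_derive _ _ _ _ _ _ _ (df z).
apply: (@ler0_derive1_nincr _ f y x) => //.
- by move=> z _; rewrite derive1E (@derive_val _ _ _ _ _ _ _ (df z)).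
- by apply: derivable_within_continuous => z _; exact: dz.
Qed.

Lemma green_meas_pair (R : realType) (u v : R -> R) :
  continuous u -> continuous v ->
  measurable_fun [set: R * R] (fun z => green u v z.1 z.2).
Proof.
move=> cu cv; rewrite /green; apply: measurable_fun_ifT.
- by apply: measurable_realfun.measurable_fun_ler; [exact: measurable_snd|exact: measurable_fst].
- apply: measurable_funM.
    exact: measurableT_comp (measurable_realfun.continuous_measurable_fun cu) measurable_fst.
  exact: measurableT_comp (measurable_realfun.continuous_measurable_fun cv) measurable_snd.
- apply: measurable_funM.
    exact: measurableT_comp (measurable_realfun.continuous_measurable_fun cu) measurable_snd.
  exact: measurableT_comp (measurable_realfun.continuous_measurable_fun cv) measurable_fst.
Qed.

Lemma green_meas2 (R : realType) (u v : R -> R) x :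
  continuous u -> continuous v ->
  measurable_fun [set: R] (green u v x).
Proof.
move=> cu cv; rewrite /green; apply: measurable_fun_ifT.
- by apply: measurable_realfun.measurable_fun_ler.
- apply: measurable_funM => //; exact: measurable_realfun.continuous_measurable_fun.
- apply: measurable_funM => //; exact: measurable_realfun.continuous_measurable_fun.
Qed.

Lemma green_meas1 (R : realType) (u v : R -> R) t :
  continuous u -> continuous v ->
  measurable_fun [set: R] (fun x => green u v x t).
Proof.
move=> cu cv; under eq_fun do rewrite green_sym; exact: green_meas2.
Qed.

Lemma green_gt0 (R : realType) (u v : R -> R) x t :
  (forall x, 0 < u x) -> (forall x, 0 < v x) -> 0 < green u v x t.
Proof. by move=> u0 v0; rewrite /green; case: ifP => _; apply: mulr_gt0. Qed.

Lemma measurable_DN (R : realType) (N : R) :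
  measurable [set x : R | N <= `|x|].
Proof.
rewrite -[X in measurable X]setTI.
by apply: measurable_fun_le => //; exact: measurable_realfun.normr_measurable.
Qed.

Lemma ge0_le_integral_nm d (T : measurableType d) (R : realType)
  (mu : {measure set T -> \bar R}) (D : set T) (f1 f2 : T -> \bar R) :
  (forall x, D x -> (0 <= f1 x)%E) -> (forall x, D x -> (f1 x <= f2 x)%E) ->
  (\int[mu]_(x in D) f1 x <= \int[mu]_(x in D) f2 x)%E.
Proof.
move=> f10 f12.
rewrite !ge0_integralE //; last by move=> x Dx; exact: le_trans (f10 x Dx) (f12 x Dx).
apply: le_ereal_sup => _ [h hf <-]; exists h => //= x.
apply: le_trans (hf x) _; rewrite /patch; case: ifP => //= /[!inE] xD.
exact: f12.
Qed.

Local Open Scope ereal_scope.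

Lemma hoelder_pt (R : realType) (g f : R -> R) (p : R) :
  (1 < p)%R -> measurable_fun [set: R] g -> measurable_fun [set: R] f ->
  (forall t, 0 < g t)%R ->
  \int[@lebesgue_measure R]_t (g t)%:E <= 1 ->
  (\int[@lebesgue_measure R]_t (g t * `|f t|)%:E) `^ p <=
  \int[@lebesgue_measure R]_t (g t * `|f t| `^ p)%:E.
Proof.
move=> p1 mg mf g0 Kle1.
have p0 : (0 < p)%R by rewrite (lt_trans _ p1).
set a := (1 - p^-1)%R.
have a0 : (0 < a)%R by rewrite subr_gt0 invf_lt1.
pose F1 t := (g t `^ a)%R.
pose F2 t := (g t `^ p^-1 * `|f t|)%R.
have mF1 : measurable_fun [set: R] F1.
  exact: (measurableT_comp (measurable_powR a) mg).
have mF2 : measurable_fun [set: R] F2.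
  apply: measurable_funM; first exact: (measurableT_comp (measurable_powR _) mg).
  exact: measurableT_comp.
have ia0 : (0 < a^-1)%R by rewrite invr_gt0.
have H := hoelder (@lebesgue_measure R) mF1 mF2 ia0 p0.
rewrite invrK /a subrK in H; have {H} := H erefl.
rewrite [X in X <= _ -> _](_ : _ = \int[@lebesgue_measure R]_t (g t * `|f t|)%:E); last first.
  rewrite Lnorm1; apply: eq_integral => t _; rewrite /=.
  congr (_%:E); rewrite /F1 /F2 mulrA -powRD; last by rewrite (gt_eqF (g0 t)) implybT.
  by rewrite /a subrK powRr1 ?ltW// ger0_norm// mulr_ge0// ltW.
have N1 : 'N[@lebesgue_measure R]_((1 - p^-1)^-1)%:E[EFin \o F1] <= 1.
  have N10 := Lnorm_ge0 (@lebesgue_measure R) ((1 - p^-1)^-1)%:E (EFin \o F1).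
  have := @powR_Lnorm _ _ _ (@lebesgue_measure R) (EFin \o F1) ((1 - p^-1)^-1) (lt0r_neq0 ia0).
  rewrite [X in _ = X -> _](_ : _ = \int[@lebesgue_measure R]_t (g t)%:E); last first.
    apply: eq_integral => t _; rewrite /=.
    congr (_%:E); rewrite /F1 ger0_norm ?powR_ge0// -powRrM.
    by rewrite mulfV ?(lt0r_neq0 a0)// powRr1 ?ltW.
  set N := 'N[_]_ _ [_] in N10 *; move=> e.
  have -> : N = (N `^ a^-1) `^ a.
    by rewrite -poweRrM mulVf ?(lt0r_neq0 a0)// poweRe1.
  rewrite /a e -(poweR1r (1 - p^-1)); apply: gt0_ler_poweR => //.
  - exact: ltW.
  - rewrite in_itv /= leey andbT; apply: integral_ge0 => t _.
    by rewrite lee_fin ltW.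
  - by rewrite in_itv /= leey andbT.
set N2 := 'N[_]_p%:E[_].
have N20 : 0 <= N2 by exact: Lnorm_ge0.
have e2 : N2 `^ p = \int[@lebesgue_measure R]_t (g t * `|f t| `^ p)%:E.
  rewrite /N2 powR_Lnorm ?(lt0r_neq0 p0)//; apply: eq_integral => t _ /=.
  congr (_%:E); rewrite /F2 ger0_norm ?mulr_ge0 ?powR_ge0//.
  by rewrite powRM ?powR_ge0// -powRrM mulVf ?(lt0r_neq0 p0)// powRr1 ?ltW.
move=> H; rewrite -e2; apply: gt0_ler_poweR.
- exact: ltW.
- rewrite in_itv /= leey andbT; apply: integral_ge0 => t _.
  by rewrite lee_fin mulr_ge0// ltW.
- by rewrite in_itv /= leey andbT.
apply: (le_trans H); rewrite -[leRHS]mul1e; exact: lee_wpmul2r.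
Qed.

Lemma tail_bound (R : realType) (u v : R -> R) (N t eps : R) :
  (forall x, 0 < u x)%R -> (forall x, 0 < v x)%R ->
  {homo u : x y /~ (x <= y)%R} -> {homo v : x y / (x <= y)%R} ->
  continuous u -> continuous v -> (0 <= eps)%R ->
  (forall s, (N <= `|s|)%R ->
     \int[@lebesgue_measure R]_y (green u v s y)%:E <= eps%:E) ->
  \int[@lebesgue_measure R]_x
     ((if (N <= `|x|)%R then green u v x t else 0%R))%:E <= eps%:E + eps%:E.
Proof.
move=> u0 v0 uD vI cu cv e0 HK.
have g0 x y : (0 <= green u v x y)%R by exact/ltW/green_gt0.
have [tN|tN] := leP N (`|t|)%R.
  apply: (@le_trans _ _ eps%:E); last by rewrite leeDl// lee_fin.
  apply: le_trans (HK t tN); apply: ge0_le_integral_nm.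
    by move=> x _; case: ifP => _; rewrite lee_fin.
  by move=> x _; case: ifP => _; rewrite lee_fin// green_sym.
have [Nt tN'] : (- N < t /\ t < N)%R by move: tN; rewrite ltr_norml => /andP.
have N0 : (0 <= N)%R by rewrite (le_trans _ (ltW tN)).
apply: (@le_trans _ _ (\int[@lebesgue_measure R]_x
    ((green u v N x)%:E + (green u v (- N) x)%:E))).
  apply: ge0_le_integral_nm.
    by move=> x _; case: ifP => _; rewrite lee_fin.
  move=> x _; case: ifP => xN; last by rewrite adde_ge0// lee_fin.
  have [x0|x0] := leP 0%R x.
    rewrite ger0_norm// in xN.
    apply: (@le_trans _ _ (green u v N x)%:E); last by rewrite leeDl// lee_fin.
    rewrite lee_fin /green (le_trans (ltW tN') xN).
    have -> : ((if (x <= N)%R then u N * v x else u x * v N) = u x * v N)%R.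
      case: ifP => // xN'; have -> // : x = N by apply/le_anti; rewrite xN' xN.
    by rewrite ler_pM2l// vI// ltW.
  rewrite ltr0_norm// in xN.
  have xN' : (x <= - N)%R by rewrite -lerN2 opprK.
  apply: (@le_trans _ _ (green u v (- N) x)%:E); last by rewrite leeDr// lee_fin.
  rewrite lee_fin /green xN'.
  have -> : (t <= x)%R = false by apply/negbTE; rewrite -ltNge (le_lt_trans xN').
  by rewrite ler_pM2r// uD// ltW.
rewrite ge0_integralD//.
- apply: leeD; apply: HK => //; by rewrite ?normrN ger0_norm.
- by move=> x _; rewrite lee_fin.
- by apply/measurable_EFinP; exact: green_meas2.
- by move=> x _; rewrite lee_fin.
- by apply/measurable_EFinP; exact: green_meas2.
Qed.

Lemma pt_bound (R : realType) (g f : R -> R) (p : R) :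
  (1 <= p)%R -> measurable_fun [set: R] g -> measurable_fun [set: R] f ->
  (forall t, 0 < g t)%R ->
  \int[@lebesgue_measure R]_t (g t)%:E <= 1 ->
  `|\int[@lebesgue_measure R]_t (g t * f t)%:E| `^ p <=
  \int[@lebesgue_measure R]_t (g t * `|f t| `^ p)%:E.
Proof.
move=> p1 mg mf g0 K1.
have h1 : `|\int[@lebesgue_measure R]_t (g t * f t)%:E| <=
          \int[@lebesgue_measure R]_t (g t * `|f t|)%:E.
  apply: (le_trans (le_abse_integral (@lebesgue_measure R) _ _)) => //.
    by apply/measurable_EFinP; exact: measurable_funM.
  apply: ge0_le_integral_nm => t _; first exact: abse_ge0.
  by rewrite abse_EFin normrM (ger0_norm (ltW (g0 t))).
have [->|pn1] := eqVneq p 1%R.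
  rewrite poweRe1//; apply: (le_trans h1); apply: ge0_le_integral_nm => t _.
    by rewrite lee_fin mulr_ge0// ltW.
  by rewrite powRr1.
have p1' : (1 < p)%R by rewrite lt_neqAle eq_sym pn1.
apply: (le_trans _ (@hoelder_pt _ g f p p1' mg mf g0 K1)).
apply: gt0_ler_poweR => //.
- exact: le_trans p1.
- by rewrite in_itv /= leey andbT abse_ge0.
- rewrite in_itv /= leey andbT; apply: integral_ge0 => t _.
  by rewrite lee_fin mulr_ge0// ltW.
Qed.

Lemma main_bound (R : realType) (u v f : R -> R) (p N eps : R) :
  (forall x, 0 < u x)%R -> (forall x, 0 < v x)%R ->
  {homo u : x y /~ (x <= y)%R} -> {homo v : x y / (x <= y)%R} ->
  continuous u -> continuous v -> (1 <= p)%R -> (0 <= eps)%R -> (eps <= 1)%R ->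
  measurable_fun [set: R] f ->
  'N[@lebesgue_measure R]_p%:E[EFin \o f] <= 1 ->
  (forall s, (N <= `|s|)%R ->
     \int[@lebesgue_measure R]_y (green u v s y)%:E <= eps%:E) ->
  \int[@lebesgue_measure R]_(x in [set x : R | (N <= `|x|)%R])
     (`|green_op u v f x| `^ p) <= (eps + eps)%:E.
Proof.
move=> u0 v0 uD vI cu cv p1 e0 e1 mf Nf HK.
have p0 : (0 < p)%R by rewrite (lt_le_trans _ p1).
have g0 x y : (0 <= green u v x y)%R by exact/ltW/green_gt0.
have mfp : measurable_fun [set: R] (fun t => `|f t| `^ p)%R.
  apply: (@measurableT_comp _ _ _ _ _ _ (@powR R ^~ p)) => //.
  exact: measurableT_comp.
pose J x := \int[@lebesgue_measure R]_t (green u v x t * `|f t| `^ p)%:E.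
apply: (@le_trans _ _ (\int[@lebesgue_measure R]_(x in [set x : R | (N <= `|x|)%R]) J x)).
  apply: ge0_le_integral_nm => x xD; first exact: poweR_ge0.
  apply: pt_bound => //; first exact: green_meas2.
    by move=> t; exact: green_gt0.
  by apply: (le_trans (HK x xD)); rewrite lee_fin.
pose Phi (z : R * R) := ((if (N <= `|z.1|)%R then green u v z.1 z.2 else 0%R)
   * `|f z.2| `^ p)%:E.
have mPhi : measurable_fun [set: R * R] Phi.
  apply/measurable_EFinP; apply: measurable_funM.
    apply: measurable_fun_ifT.
    - apply: measurable_fun_ler => //.
      by apply: measurableT_comp; [exact: normr_measurable|exact: measurable_fst].
    - exact: green_meas_pair.
    - exact: measurable_cst.
  exact: measurableT_comp mfp measurable_snd.
have Phi0 z : 0 <= Phi z.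
  by rewrite lee_fin mulr_ge0 ?powR_ge0//; case: ifP.
have -> : \int[@lebesgue_measure R]_(x in [set x : R | (N <= `|x|)%R]) J x =
   \int[@lebesgue_measure R]_x \int[@lebesgue_measure R]_t Phi (x, t).
  rewrite integral_mkcond; apply: eq_integral => x _; rewrite /patch /J /Phi /=.
  case: ifPn => [/set_mem /= -> //|xD].
  have -> : (N <= `|x|)%R = false.
    by apply/negbTE/negP => h; move/negP: xD; apply; exact/mem_set.
  by under eq_integral do rewrite mul0r; rewrite integral0.
rewrite (fubini_tonelli (m1 := @lebesgue_measure R) (m2 := @lebesgue_measure R) Phi mPhi Phi0).
apply: (@le_trans _ _ (\int[@lebesgue_measure R]_t ((eps + eps) * `|f t| `^ p)%:E)).
  apply: ge0_le_integral_nm => t _.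
    by apply: integral_ge0 => x _; exact: Phi0.
  rewrite /Phi /=.
  under eq_integral do rewrite EFinM.
  rewrite ge0_integralZr //.
  - rewrite EFinM; apply: lee_wpmul2r; first by rewrite lee_fin powR_ge0.
    by rewrite EFinD; apply: tail_bound.
  - apply/measurable_EFinP; apply: measurable_fun_ifT.
    + by apply: measurable_fun_ler => //; exact: normr_measurable.
    + exact: green_meas1.
    + exact: measurable_cst.
  - by move=> x _; rewrite lee_fin; case: ifP.
under eq_integral do rewrite EFinM.
rewrite ge0_integralZl //; try by [move=> t _; rewrite lee_fin powR_ge0 |
   rewrite lee_fin addr_ge0 | apply/measurable_EFinP].
rewrite -[leRHS]mule1; apply: lee_wpmul2l; first by rewrite lee_fin addr_ge0.
have <- : 'N[@lebesgue_measure R]_p%:E[EFin \o f] `^ p =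
    \int[@lebesgue_measure R]_t (`|f t| `^ p)%:E.
  rewrite powR_Lnorm ?(lt0r_neq0 p0)//; apply: eq_integral => t _.
rewrite -(poweR1r p); apply: gt0_ler_poweR => //.
- exact: le_trans p1.
- by rewrite in_itv /= leey andbT Lnorm_ge0.
- by rewrite in_itv /= leey andbT.
Qed.

Lemma K_small (R : realType) (K : R -> \bar R) :
  K x @[x --> +oo%R] --> 0%E -> K x @[x --> -oo%R] --> 0%E ->
  forall eps : R, (0 < eps)%R ->
  exists M : R, forall s, (M <= `|s|)%R -> K s <= eps%:E.
Proof.
move=> Kp Kn eps e0.
have H (F : set_system R) : Filter F -> K x @[x --> F] --> 0%E ->
    \forall x \near F, K x <= eps%:E.
  move=> FF /fine_cvgP[Kfin Kc].
  move/cvgrPdist_le : Kc => /(_ eps e0).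
  apply: filter_app; apply: filterS Kfin => x xfin.
  rewrite sub0r normrN /= => h.
  by rewrite -(fineK xfin) lee_fin (le_trans (ler_norm _) h).
have [M1 [_ HM1]] := H _ _ Kp.
have [M2 [_ HM2]] := H _ _ Kn.
exists (Num.max (M1 + 1) (- M2 + 1))%R => s.
rewrite ge_max => /andP[h1 h2].
have [s0|s0] := leP 0%R s.
  apply: HM1; rewrite ger0_norm// in h1.
  by rewrite (lt_le_trans _ h1)// ltrDl.
apply: HM2; rewrite ltr0_norm// in h2.
by rewrite -ltrN2 (lt_le_trans _ h2)// ltrDl.
Qed.

Local Close Scope ereal_scope.

Theorem lemma5p4 (R : realType) (q u u' v v' : R -> R) (p : R) :
  admissible_q q ->
  PFSS q u u' v v' ->
  1 <= p ->
  (\int[@lebesgue_measure R]_t (green u v x t)%:E)%E @[x --> +oo] --> 0%E ->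
  (\int[@lebesgue_measure R]_t (green u v x t)%:E)%E @[x --> -oo] --> 0%E ->
  ereal_sup [set (\int[@lebesgue_measure R]_(x in [set x : R | (N <= `|x|)%R])
                     (`|green_op u v f x| `^ p))%E
            | f in [set f : R -> R | measurable_fun [set: R] f /\
                       ('N[@lebesgue_measure R]_p%:E[EFin \o f] <= 1)%E]]
    @[N --> +oo] --> 0%E.
Proof.
move=> _ [[du _] [[dv _] [u0 [v0 [u'0 [v'0 _]]]]]] p1 Kp Kn.
have cu := deriv_cont _ _ _ du; have cv := deriv_cont _ _ _ dv.
have uD := deriv_nincr _ _ _ du (fun x => ltW (u'0 x)).
have vI := deriv_ndecr _ _ _ dv (fun x => ltW (v'0 x)).
set S := fun N => ereal_sup _.
have S0 N : (0 <= S N)%E.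
  apply: ereal_sup_ge; exists (\int[@lebesgue_measure R]_(x in [set x : R | (N <= `|x|)%R])
                     (`|green_op u v (cst 0%R) x| `^ p))%E.
    exists (cst 0%R) => //; split; first exact: measurable_cst.
    rewrite (@eq_Lnorm _ _ _ _ _ _ (cst 0%E)) // Lnorm0 //.
    by rewrite eqe gt_eqF// (lt_le_trans _ p1).
  by apply: integral_ge0 => x _; exact: poweR_ge0.
have SB eps : 0 < eps -> eps <= 1 ->
    exists M : R, forall N, M < N -> (S N <= (eps + eps)%:E)%E.
  move=> e0 e1; have [M HM] := K_small _ _ Kp Kn _ e0.
  exists M => N MN; apply: ge_ereal_sup => _ [f [mf Nf] <-].
  apply: main_bound => //; first exact: ltW.
  by move=> s Ns; apply: HM; rewrite (le_trans (ltW MN)).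
apply/fine_cvgP; split.
  have [M HM] := SB 1 ltr01 (lexx _).
  exists M; split; first exact: num_real.
  move=> N MN; rewrite ge0_fin_numE//.
  by rewrite (le_lt_trans (HM _ MN)) ?ltey.
apply/cvgrPdist_le => e e0.
have e20 : 0 < Num.min (e / 2) 1 by rewrite lt_min ltr01 divr_gt0.
have m2 : Num.min (e / 2) 1 <= 1 by rewrite ge_min lexx orbT.
have [M HM] := SB _ e20 m2.
exists M; split; first exact: num_real.
move=> N MN; rewrite sub0r normrN /=.
have SNfin : S N \is a fin_num.
  by rewrite ge0_fin_numE// (le_lt_trans (HM _ MN)) ?ltey.
rewrite ger0_norm ?fine_ge0//.
rewrite -lee_fin fineK// (le_trans (HM _ MN))// lee_fin.
have m1 : Num.min (e / 2) 1 <= e / 2 by rewrite ge_min lexx.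
rewrite (le_trans (lerD m1 m1))//.
by rewrite -splitr.
Qed.
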